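(* Let $\mu\in\mathcal P_c^*(\mathbb R^2)$. Then there exists a constant $c>0$ such that $\operatorname{std}(\widehat{\mathcal R}_\theta[\mu])\ge c$ for all $\theta\in\mathbb S_1$.
   Context: $\mathbb S_1=\{x\in\mathbb R^2:\|x\|=1\}$; $\mathcal R_\theta[\mu]=(\langle\cdot,\theta\rangle)_\#\mu$. Fix a reference Borel probability measure $\rho$ on $\mathbb R$ without atoms. For a probability measure $\nu$ on $\mathbb R$ with $F_\nu(t)=\nu((-\infty,t])$, $F_\nu^{[-1]}(t)=\inf\{s:F_\nu(s)>t\}$ and the CDT is $\hat\nu=F_\nu^{[-1]}\circ F_\rho$; $\widehat{\mathcal R}_\theta[\mu]$ is the CDT of $\mathcal R_\theta[\mu]$. For $g\in L^2_\rho(\mathbb R)$, $\operatorname{mean}(g)=\int g\,\mathrm d\rho$, $\operatorname{std}(g)=(\int|g-\operatorname{mean}(g)|^2\mathrm d\rho)^{1/2}$. $\mathcal P_c^*(\mathbb R^2)$ is the set of compactly supported Borel probability measures on $\mathbb R^2$ whose support has affine hull of dimension $>1$. *)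

(* Defs.v *)
From HB Require Import structures.
From mathcomp Require Import all_boot all_order all_algebra.
From mathcomp Require Import all_classical all_reals all_analysis.
Set Implicit Arguments. Unset Strict Implicit. Unset Printing Implicit Defensive.
Import Order.TTheory GRing.Theory Num.Theory.
Import numFieldNormedType.Exports.
Local Open Scope classical_set_scope.
Local Open Scope ring_scope.

Section defs.
Context (R : realType).

Definition S1 : set (R * R) := [set th | th.1 ^+ 2 + th.2 ^+ 2 = 1].

Definition proj (th : R * R) : R * R -> R := fun x => x.1 * th.1 + x.2 * th.2.

Definition radon (mu : set (R * R) -> \bar R) (th : R * R) : set R -> \bar R :=
  pushforward mu (proj th).

Definition cdf (nu : set R -> \bar R) (t : R) : R := fine (nu [set` `]-oo, t]]).

Definition ginv (F : R -> R) (t : R) : R := inf [set s | t < F s].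

Definition cdt (rho : set R -> \bar R) (nu : set R -> \bar R) : R -> R :=
  ginv (cdf nu) \o cdf rho.

Definition radon_cdt (rho : set R -> \bar R) (mu : set (R * R) -> \bar R)
  (th : R * R) : R -> R := cdt rho (radon mu th).

Definition mean (rho : {measure set R -> \bar R}) (g : R -> R) : R :=
  fine (\int[rho]_x (g x)%:E).
Definition std (rho : {measure set R -> \bar R}) (g : R -> R) : R :=
  Num.sqrt (fine (\int[rho]_x (((g x - mean rho g) ^+ 2)%:E))).

Definition support (mu : set (R * R) -> \bar R) : set (R * R) :=
  [set x | forall r : R, 0 < r -> (0 < mu (ball x r))%E].

Definition is_line (L : set (R * R)) : Prop :=
  exists a b c : R, (a != 0 \/ b != 0) /\ L = [set x | a * x.1 + b * x.2 = c].

(* affine hull of S has dimension > 1 (i.e. = 2): S lies in no affine line *)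
Definition affdim_gt1 (S : set (R * R)) : Prop :=
  ~ exists L, is_line L /\ S `<=` L.

Definition Pc_star (mu : set (R * R) -> \bar R) : Prop :=
  compact (support mu) /\ affdim_gt1 (support mu).

Definition no_atoms (rho : set R -> \bar R) : Prop := forall t : R, rho [set t] = 0%E.

End defs.

(* Main.v *)
Require Import Defs.
From HB Require Import structures.
From mathcomp Require Import all_boot all_order all_algebra.
From mathcomp Require Import all_classical all_reals all_analysis.
From mathcomp Require Import ring lra.
Import Order.TTheory GRing.Theory Num.Theory.
Import numFieldNormedType.Exports.
Local Open Scope classical_set_scope.
Local Open Scope ring_scope.
Set Implicit Arguments. Unset Strict Implicit.

Lemma arch_inv (R : realType) (e : R) : 0 < e -> exists n : nat, n.+1%:R^-1 < e.
Proof.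
move=> e0; exists (Num.truncn e^-1).
rewrite -[e in _ < e]invrK ltf_pV2 ?posrE ?invr_gt0 //.
exact: truncnS_gt.
Qed.

Section aux.
Variable R : realType.
Local Open Scope ereal_scope.
Lemma cvg_gt_ex (u : nat -> \bar R) l x : u @ \oo --> l -> x < l -> exists n, x < u n.
Proof.
move=> ul xl.
have H : nbhs l [set y | x < y] by apply: open_nbhs_nbhs; split => //; exact: open_ereal_gt_ereal.
have H2 : \forall n \near \oo, x < u n := ul _ H.
have [n Hn] := filter_ex H2; by exists n.
Qed.
Lemma cvg_lt_ex (u : nat -> \bar R) l x : u @ \oo --> l -> l < x -> exists n, u n < x.
Proof.
move=> ul xl.
have H : nbhs l [set y | y < x] by apply: open_nbhs_nbhs; split => //; exact: open_ereal_lt_ereal.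
have H2 : \forall n \near \oo, u n < x := ul _ H.
have [n Hn] := filter_ex H2; by exists n.
Qed.
End aux.

Section rho.
Variable R : realType.
Variable P : probability R R.

Lemma cdfE t : P [set` `]-oo, t]] = (Defs.cdf P t)%:E.
Proof. by rewrite /Defs.cdf fineK // fin_num_measure. Qed.

Lemma Fcdf_ge0 t : 0 <= Defs.cdf P t.
Proof. by rewrite /Defs.cdf fine_ge0 // measure_ge0. Qed.

Lemma Fcdf_le1 t : Defs.cdf P t <= 1.
Proof. by rewrite -lee_fin -cdfE probability_le1. Qed.

Lemma cdf_mono s t : s <= t -> Defs.cdf P s <= Defs.cdf P t.
Proof.
move=> st; rewrite -lee_fin -!cdfE le_measure ?inE //.
by move=> x /=; rewrite !in_itv /= => /le_trans; apply.
Qed.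



Lemma cdf_up s : s < 1 -> exists x, s < Defs.cdf P x.
Proof.
move=> s1.
pose A := fun n : nat => [set` `]-oo, n%:R]] : set R.
have mA n : measurable (A n) by exact: measurable_itv.
have UA : \bigcup_n A n = setT.
  apply/seteqP; split => // x _.
  exists (Num.truncn `|x|).+1 => //=; rewrite /A /= in_itv /=.
  exact: (le_trans (ler_norm x) (ltW (truncnS_gt _))).
have ndA : nondecreasing_seq A.
  move=> n m nm; apply/subsetPset => x; rewrite /A /= !in_itv /= => /le_trans; apply.
  by rewrite ler_nat.
have := nondecreasing_cvg_mu (mu := P) mA _ ndA; rewrite UA => /(_ measurableT); move=> h.
have h1 : (s%:E < P setT)%E by rewrite probability_setT lte_fin.
have [n Hn] := cvg_gt_ex h h1.
by exists n%:R; rewrite -lte_fin -cdfE.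
Qed.

Lemma cdf_down s : 0 < s -> exists x, Defs.cdf P x < s.
Proof.
move=> s0.
pose A := fun n : nat => [set` `]-oo, - n%:R]] : set R.
have mA n : measurable (A n) by exact: measurable_itv.
have IA : \bigcap_n A n = set0.
  apply/seteqP; split => // x /= Hx.
  have := Hx (Num.truncn `|x|).+1 I; rewrite /A /= in_itv /= => h.
  have h2 : - x <= `|x| by rewrite -normrN ler_norm.
  have := truncnS_gt `|x|; lra.
have niA : nonincreasing_seq A.
  move=> n m nm; apply/subsetPset => x; rewrite /A /= !in_itv /= => h.
  by apply: (le_trans h); rewrite lerN2 ler_nat.
have PA0 : (P (A 0%N) < +oo)%E by rewrite ltey_eq fin_num_measure.
have := nonincreasing_cvg_mu PA0 mA _ niA; rewrite IA => /(_ measurable0) h.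
have h1 : (P set0 < s%:E)%E by rewrite measure0 lte_fin.
have [n Hn] := cvg_lt_ex h h1.
by exists (- n%:R); rewrite -lte_fin -cdfE.
Qed.

Lemma cdf_rc y s : Defs.cdf P y < s -> exists n : nat, Defs.cdf P (y + n.+1%:R^-1) < s.
Proof.
move=> ys.
pose A := fun n : nat => [set` `]-oo, y + n.+1%:R^-1]] : set R.
have mA n : measurable (A n) by exact: measurable_itv.
have IA : \bigcap_n A n = [set` `]-oo, y]].
  apply/seteqP; split => x /=; rewrite in_itv /=; last first.
    by move=> xy n _; rewrite /A /= in_itv /=; apply: (le_trans xy); rewrite lerDl invr_ge0.
  move=> Hx; rewrite leNgt; apply/negP => yx.
  have [n Hn] := arch_inv (ltac:(by rewrite subr_gt0) : 0 < x - y).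
  have := Hx n I; rewrite /A /= in_itv /= -lerBlDl leNgt.
  by rewrite Hn.
have niA : nonincreasing_seq A.
  move=> n m nm; apply/subsetPset => x; rewrite /A /= !in_itv /= => h.
  apply: (le_trans h); rewrite lerD2l lef_pV2 ?posrE ?ltr0Sn // ler_nat.
  by [].
have PA0 : (P (A 0%N) < +oo)%E by rewrite ltey_eq fin_num_measure.
have := nonincreasing_cvg_mu PA0 mA _ niA; rewrite IA => /(_ (measurable_itv _)) h.
have h1 : (P [set` `]-oo, y]] < s%:E)%E by rewrite cdfE lte_fin.
have [n Hn] := cvg_lt_ex h h1.
by exists n; rewrite -lte_fin -cdfE.
Qed.

Lemma cdf_lc y s : (s%:E < P [set` `]-oo, y[])%E ->
  exists n : nat, s < Defs.cdf P (y - n.+1%:R^-1).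
Proof.
move=> ys.
pose A := fun n : nat => [set` `]-oo, y - n.+1%:R^-1]] : set R.
have mA n : measurable (A n) by exact: measurable_itv.
have UA : \bigcup_n A n = [set` `]-oo, y[].
  apply/seteqP; split => x /=; rewrite in_itv /=.
    move=> [n _]; rewrite /A /= in_itv /= => h; apply: (le_lt_trans h).
    by rewrite ltrBlDr ltrDl invr_gt0.
  move=> xy; have [n Hn] := arch_inv (ltac:(by rewrite subr_gt0) : 0 < y - x).
  exists n => //; rewrite /A /= in_itv /= lerBrDr -lerBrDl ltW //.
have ndA : nondecreasing_seq A.
  move=> n m nm; apply/subsetPset => x; rewrite /A /= !in_itv /= => h.
  apply: (le_trans h); rewrite lerD2l lerN2 lef_pV2 ?posrE ?ltr0Sn // ler_nat.
  by [].
have := nondecreasing_cvg_mu (mu := P) mA _ ndA; rewrite UA => /(_ (measurable_itv _)) h.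
have [n Hn] := cvg_gt_ex h ys.
by exists n; rewrite -lte_fin -cdfE.
Qed.

Hypothesis noat : no_atoms P.

Lemma cdf_open y : P [set` `]-oo, y[] = (Defs.cdf P y)%:E.
Proof.
rewrite -cdfE.
have -> : [set` `]-oo, y]] = [set` `]-oo, y[] `|` [set y].
  apply/seteqP; split => x /=; rewrite !in_itv /=.
    by rewrite le_eqVlt => /orP[/eqP ->|->]; [right|left].
  by case=> [/ltW|->].
rewrite measureU //.
  by rewrite -[LHS]adde0; congr (_ + _); apply/esym; exact: noat y.

by apply/seteqP; split => x //= []; rewrite in_itv /= => h hx; move: h; rewrite hx ltxx.
Qed.


Lemma cdf_between s' s : 0 < s' -> s' < s -> s < 1 ->
  exists x, s' < Defs.cdf P x /\ Defs.cdf P x < s.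
Proof.
move=> s'0 s's s1.
pose E := [set x | s <= Defs.cdf P x].
have [x1 Hx1] := cdf_up s1.
have [x0 Hx0] := cdf_down (lt_trans s'0 s's).
have lbE : lbound E x0.
  move=> e; rewrite /E /= => He; rewrite leNgt; apply/negP => ex0.
  have := cdf_mono (ltW ex0); lra.
have nE : E !=set0 by exists x1; rewrite /E /=; exact: ltW.
have hlE : has_lbound E by exists x0.
set y := inf E.
have Fy : s <= Defs.cdf P y.
  rewrite leNgt; apply/negP => /cdf_rc [n Hn].
  have : inf E < y + n.+1%:R^-1 by rewrite ltrDl invr_gt0.
  move=> /(inf_lt nE) [e He ey].
  have := cdf_mono (ltW ey); rewrite /E /= in He; lra.
have : (s'%:E < P [set` `]-oo, y[])%E by rewrite cdf_open lte_fin; lra.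
move=> /cdf_lc [n Hn]; exists (y - n.+1%:R^-1); split => //.
rewrite ltNge; apply/negP => hE.
have := ge_inf hlE hE; rewrite -/y.
have : 0 < n.+1%:R^-1 :> R by rewrite invr_gt0 ltr0Sn.
move=> h1 h2; clearbody y; move: h1 h2; set a := n.+1%:R^-1; clearbody a; lra.
Qed.
End rho.


Section ginv.
Variable R : realType.
Variables (F : R -> R) (K : R).
Hypothesis Fmono : forall s t, s <= t -> F s <= F t.
Hypothesis Fle1 : forall s, F s <= 1.
Hypothesis Flo : forall s, s < - K -> F s = 0.
Hypothesis Fhi : forall s, K <= s -> F s = 1.
Hypothesis K0 : 0 <= K.

Lemma ginv_lb t : 0 <= t -> lbound [set s | t < F s] (- K).
Proof.
move=> t0 e /= te; rewrite leNgt; apply/negP => /Flo h; lra.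
Qed.

Lemma ginv_bound t : 0 <= t -> `|ginv F t| <= K.
Proof.
move=> t0; rewrite /ginv.
have [t1|t1] := ltP t 1.
  have nE : [set s | t < F s] !=set0 by exists K; rewrite /= Fhi.
  have hl : has_lbound [set s | t < F s] by exists (- K); exact: ginv_lb.
  rewrite ler_norml; apply/andP; split.
    exact: lb_le_inf (ginv_lb t0).
  by apply: ge_inf => //=; rewrite Fhi.
rewrite (_ : [set s | t < F s] = set0) ?inf0 ?normr0 //.
apply/seteqP; split => // s /= ts; have := Fle1 s; lra.
Qed.

Lemma ginv_le t a : 0 <= t -> t < F a -> ginv F t <= a.
Proof.
move=> t0 ta; apply: ge_inf => //; exists (- K); exact: ginv_lb.
Qed.

Lemma ginv_ge t b : F b <= t -> t < 1 -> b <= ginv F t.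
Proof.
move=> bt t1; apply: lb_le_inf; first by exists K; rewrite /= Fhi.
move=> e /= te; rewrite leNgt; apply/negP => /ltW /Fmono; lra.
Qed.
End ginv.




Section mu.
Variable R : realType.
Variable mu : probability (R * R)%type R.

Lemma measurable_proj (th : R * R) : measurable_fun setT (Defs.proj th).
Proof.
rewrite /Defs.proj; apply: measurable_realfun.measurable_funD.
  by apply: measurable_realfun.measurable_funM => //; exact: measurable_fst.
by apply: measurable_realfun.measurable_funM => //; exact: measurable_snd.
Qed.

Lemma measurable_proj_pre (th : R * R) (A : set R) : measurable A -> measurable (Defs.proj th @^-1` A).
Proof. by move=> mA; rewrite -[_ @^-1` _]setTI; exact: measurable_proj. Qed.

Lemma ballX (z : R * R) r : ball z r = ball z.1 r `*` ball z.2 r.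
Proof. by []. Qed.

Lemma measurable_ball2 (z : R * R) r : measurable (ball z r).
Proof. by rewrite ballX; apply: measurableX; exact: measurable_realfun.measurable_ball. Qed.

Definition cell (n : nat) (i j : int) : set (R * R) :=
  [set` `[i%:~R / n.+1%:R, (i + 1)%:~R / n.+1%:R[] `*`
  [set` `[j%:~R / n.+1%:R, (j + 1)%:~R / n.+1%:R[].

Lemma measurable_cell n i j : measurable (cell n i j).
Proof. by apply: measurableX; exact: measurable_itv. Qed.

Lemma cell_floor n (x : R) : x \in `[(Num.floor (x * n.+1%:R))%:~R / n.+1%:R,
  (Num.floor (x * n.+1%:R) + 1)%:~R / n.+1%:R[.
Proof.
have := floor_itv (x * n.+1%:R) => /andP[h1 h2].
rewrite in_itv /= ler_pdivrMr ?ltr0Sn // ltr_pdivlMr ?ltr0Sn //.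
by rewrite h1 h2.
Qed.

Lemma cell_small n (i : int) (x y : R) :
  x \in `[i%:~R / n.+1%:R, (i + 1)%:~R / n.+1%:R[ ->
  y \in `[i%:~R / n.+1%:R, (i + 1)%:~R / n.+1%:R[ -> `|x - y| < n.+1%:R^-1.
Proof.
rewrite !in_itv /= => /andP[x1 x2] /andP[y1 y2].
have e : (i + 1)%:~R / n.+1%:R = i%:~R / n.+1%:R + n.+1%:R^-1 :> R.
  by rewrite intrD mulrDl div1r.
rewrite e in x2 y2; move: x1 x2 y1 y2.
set a := i%:~R / n.+1%:R; set b := n.+1%:R^-1; clearbody a b.
rewrite ltr_norml; move=> *; apply/andP; split; lra.
Qed.

Definition cellseq (k : nat) : set (R * R) :=
  match unpickle k : option (nat * int * int) with
  | Some (n, i, j) => if mu (cell n i j) == 0%E then cell n i j else set0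
  | None => set0
  end.

Lemma measurable_cellseq k : measurable (cellseq k).
Proof.
rewrite /cellseq; case: (unpickle k) => [[[n i] j]|] //.
by case: ifP => // _; exact: measurable_cell.
Qed.

Lemma mu_cellseq k : mu (cellseq k) = 0%E.
Proof.
rewrite /cellseq; case: (unpickle k) => [[[n i] j]|]; last by rewrite measure0.
by case: ifP => [/eqP //|_]; rewrite measure0.
Qed.

Lemma null_outside (A : set (R * R)) : measurable A ->
  A `<=` ~` Defs.support mu -> mu A = 0%E.
Proof.
move=> mA Asupp.
apply/eqP; rewrite eq_le measure_ge0 andbT.
have cov : A `<=` \bigcup_k cellseq k.
  move=> z /Asupp /= nz.
  have [r r0 hr] : exists2 r : R, 0 < r & mu (ball z r) = 0%E.
    move/existsNP : nz => [r /not_implyP [r0 hr]]; exists r => //.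
    apply/eqP; rewrite eq_le measure_ge0 andbT leNgt; exact/negP.
  have [n Hn] := arch_inv r0.
  pose i := Num.floor (z.1 * n.+1%:R); pose j := Num.floor (z.2 * n.+1%:R).
  have zc : cell n i j z.
    by split => /=; rewrite /i /j; exact: cell_floor.
  have cb : cell n i j `<=` ball z r.
    move=> x [/= x1 x2]; split; rewrite /ball /= ; apply: lt_trans Hn.
      by apply: cell_small x1; rewrite /i; exact: cell_floor.
    by apply: cell_small x2; rewrite /j; exact: cell_floor.
  have c0 : mu (cell n i j) = 0%E.
    apply/eqP; rewrite eq_le measure_ge0 andbT -hr.
    by apply: le_measure => //; rewrite inE; [exact: measurable_cell| exact: measurable_ball2].
  exists (pickle (n, i, j)) => //; rewrite /cellseq pickleK c0 eqxx; exact: zc.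
apply: le_trans (measure_sigma_subadditive _ measurable_cellseq mA cov) _.
by rewrite eseries0 // => k _ _; exact: mu_cellseq.
Qed.


Lemma support_bounded : compact (Defs.support mu) ->
  exists M : R, 0 < M /\ forall x, Defs.support mu x -> `|x.1| <= M /\ `|x.2| <= M.
Proof.
move=> /compact_bounded [M [Mreal HM]].
have hM0 : M <= Num.max M 0 by rewrite le_max lexx.
have hM1 : 0 <= Num.max M 0 by rewrite le_max lexx orbT.
have hM : M < Num.max M 0 + 1 by lra.
have := HM _ hM => /= HB.
exists (Num.max M 0 + 1); split; first by lra.
move=> x /HB; rewrite prod_normE ge_max => /andP[h1 h2]; by [].
Qed.

Lemma S1_bound (th : R * R) : S1 th -> `|th.1| <= 1 /\ `|th.2| <= 1.
Proof.
rewrite /S1 /= => h.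
have h1 : th.1 ^+ 2 <= 1 by rewrite -h lerDl sqr_ge0.
have h2 : th.2 ^+ 2 <= 1 by rewrite -h lerDr sqr_ge0.
by split; rewrite -(expr_le1 (n:=2)) // ?normr_ge0 // real_normK ?num_real.
Qed.

Lemma proj_bound (th : R * R) M x : `|th.1| <= 1 -> `|th.2| <= 1 ->
  `|x.1| <= M -> `|x.2| <= M -> `|Defs.proj th x| <= M + M.
Proof.
move=> t1 t2 x1 x2; rewrite /Defs.proj.
apply: (le_trans (ler_normD _ _)); apply: lerD; rewrite normrM.
  by rewrite -[M]mulr1 ler_pM // ?normr_ge0.
by rewrite -[M]mulr1 ler_pM // ?normr_ge0.
Qed.


Definition G (th : R * R) (s : R) := Defs.cdf (radon mu th) s.

Lemma GE th s : mu (Defs.proj th @^-1` [set` `]-oo, s]]) = (G th s)%:E.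
Proof.
rewrite /G /Defs.cdf /radon /pushforward fineK // fin_num_measure //.
by apply: measurable_proj_pre; exact: measurable_itv.
Qed.

Lemma G_mono th s t : s <= t -> G th s <= G th t.
Proof.
move=> st; rewrite -lee_fin -!GE le_measure ?inE //; try by apply: measurable_proj_pre; exact: measurable_itv.
by move=> x /=; rewrite !in_itv /= => /le_trans; apply.
Qed.

Lemma G_le1 th s : G th s <= 1.
Proof. by rewrite -lee_fin -GE probability_le1 //; by apply: measurable_proj_pre; exact: measurable_itv. Qed.

Lemma G_ge0 th s : 0 <= G th s.
Proof. by rewrite -lee_fin -GE measure_ge0. Qed.

Lemma G_lo th M s : S1 th -> (forall x, Defs.support mu x -> `|x.1| <= M /\ `|x.2| <= M) ->
  s < - (M + M) -> G th s = 0.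
Proof.
move=> /S1_bound [t1 t2] HM sM.
have h : mu (Defs.proj th @^-1` [set` `]-oo, s]]) = 0%E.
  apply: null_outside; first by apply: measurable_proj_pre; exact: measurable_itv.
  move=> x /=; rewrite in_itv /= => xs sx.
  have [x1 x2] := HM _ sx.
  have := proj_bound t1 t2 x1 x2; rewrite ler_norml => /andP[h _]; lra.
by move: h; rewrite GE => -[].
Qed.

Lemma G_hi th M s : S1 th -> (forall x, Defs.support mu x -> `|x.1| <= M /\ `|x.2| <= M) ->
  M + M <= s -> G th s = 1.
Proof.
move=> /S1_bound [t1 t2] HM sM.
have mpre : measurable (Defs.proj th @^-1` [set` `]-oo, s]]).
  by apply: measurable_proj_pre; exact: measurable_itv.
have h0 : mu (~` (Defs.proj th @^-1` [set` `]-oo, s]])) = 0%E.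
  apply: null_outside; first exact: measurableC.
  move=> x /=; rewrite in_itv /= => xs sx; apply: xs.
  have [x1 x2] := HM _ sx.
  have := proj_bound t1 t2 x1 x2; rewrite ler_norml => /andP[_ h]; lra.
move: h0; rewrite probability_setC // GE -EFinB => -[] /eqP.
by rewrite subr_eq0 => /eqP <-.
Qed.

End mu.

Section geo.
Variable R : realType.

Lemma not_in_line (S : set (R * R)) : affdim_gt1 S -> forall a b c : R, (a != 0 \/ b != 0) ->
  exists x, S x /\ a * x.1 + b * x.2 != c.
Proof.
move=> HS a b c ab; apply: contrapT => hn; apply: HS.
exists [set x | a * x.1 + b * x.2 = c]; split; first by exists a, b, c.
move=> x Sx /=; apply/eqP; apply/negPn/negP => hx; apply: hn; by exists x.
Qed.

Lemma three_points (S : set (R * R)) : affdim_gt1 S ->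
  exists p0 p1 p2, [/\ S p0, S p1, S p2 &
    (p1.1 - p0.1) * (p2.2 - p0.2) - (p1.2 - p0.2) * (p2.1 - p0.1) != 0].
Proof.
move=> HS.
have [p0 [S0 _]] := @not_in_line S HS 1 0 0 (or_introl (oner_neq0 R)).
have [p1 [S1' h1]] := @not_in_line S HS 1 0 p0.1 (or_introl (oner_neq0 R)).
have hb : - (p1.1 - p0.1) != 0.
  by move: h1; rewrite mul1r mul0r addr0 oppr_eq0 subr_eq0.
have [p2 [S2 h2]] := @not_in_line S HS (p1.2 - p0.2) (- (p1.1 - p0.1)) ((p1.2 - p0.2) * p0.1 + - (p1.1 - p0.1) * p0.2) (or_intror hb).
exists p0, p1, p2; split => //.
apply: contra h2 => /eqP h; apply/eqP.
have : (p1.1 - p0.1) * (p2.2 - p0.2) - (p1.2 - p0.2) * (p2.1 - p0.1) = 0 := h.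
move=> e; lra.
Qed.

Lemma eta_lemma (e1x e1y e2x e2y : R) : e1x * e2y - e1y * e2x != 0 ->
  exists2 eta : R, 0 < eta & forall t1 t2 : R, t1 ^+ 2 + t2 ^+ 2 = 1 ->
    eta <= `|e1x * t1 + e1y * t2| \/ eta <= `|e2x * t1 + e2y * t2|.
Proof.
set D := e1x * e2y - e1y * e2x => D0.
set A := e2x ^+ 2 + e2y ^+ 2.
set B := e1x ^+ 2 + e1y ^+ 2.
have A0 : 0 <= A by rewrite addr_ge0 ?sqr_ge0.
have B0 : 0 <= B by rewrite addr_ge0 ?sqr_ge0.
have D2 : 0 < D ^+ 2 by rewrite lt_neqAle sqr_ge0 andbT eq_sym sqrf_eq0.
have Q0 : 0 < A + B.
  rewrite lt_neqAle addr_ge0 // andbT eq_sym; apply/negP => /eqP AB.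
  move: AB; rewrite /A /B => AB.
  have h1 := sqr_ge0 e1x; have h2 := sqr_ge0 e1y.
  have h3 := sqr_ge0 e2x; have h4 := sqr_ge0 e2y.
  have z1 : e1x = 0 by apply/eqP; rewrite -sqrf_eq0 eq_le sqr_ge0 andbT; lra.
  have z2 : e1y = 0 by apply/eqP; rewrite -sqrf_eq0 eq_le sqr_ge0 andbT; lra.
  by move: D0; rewrite /D z1 z2 !mul0r subr0 eqxx.
set c := D ^+ 2 / (4 * (A + B)).
have c0 : 0 < c by rewrite divr_gt0 // mulr_gt0.
have cQ : c * (4 * (A + B)) = D ^+ 2 by rewrite /c divfK // mulf_neq0 // gt_eqF.
exists (Num.sqrt c); first by rewrite sqrtr_gt0.
move=> t1 t2 ht.
set s1 := e1x * t1 + e1y * t2; set s2 := e2x * t1 + e2y * t2.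
have [h1|h1] := leP (Num.sqrt c) `|s1|; first by left.
have [h2|h2] := leP (Num.sqrt c) `|s2|; first by right.
exfalso.
have q1 : s1 ^+ 2 < c.
  by rewrite -real_normK ?num_real // -(sqr_sqrtr (ltW c0)) ltr_pXn2r // ?nnegrE ?sqrtr_ge0.
have q2 : s2 ^+ 2 < c.
  by rewrite -real_normK ?num_real // -(sqr_sqrtr (ltW c0)) ltr_pXn2r // ?nnegrE ?sqrtr_ge0.
have E1 : D ^+ 2 = (s1 * e2y - s2 * e1y) ^+ 2 + (e1x * s2 - e2x * s1) ^+ 2.
  rewrite -[D ^+ 2]mulr1 -ht /s1 /s2 /D; ring.
have E2 : forall x y : R, (x - y) ^+ 2 <= 2 * x ^+ 2 + 2 * y ^+ 2.
  move=> x y; have := sqr_ge0 (x + y); nra.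
have F1 : s1 ^+ 2 * A <= c * A by rewrite ler_wpM2r // ltW.
have F2 : s2 ^+ 2 * B <= c * B by rewrite ler_wpM2r // ltW.
have G : D ^+ 2 <= 2 * (s1 ^+ 2 * A + s2 ^+ 2 * B).
  rewrite E1; apply: le_trans (lerD (E2 (s1 * e2y) (s2 * e1y)) (E2 (e1x * s2) (e2x * s1))) _.
  by rewrite le_eqVlt; apply/orP; left; apply/eqP; rewrite /A /B; ring.
have G2 : 2 * (s1 ^+ 2 * A + s2 ^+ 2 * B) <= 2 * (c * A + c * B) by lra.
have G3 : 4 * (c * A + c * B) = D ^+ 2 by rewrite -cQ; ring.
lra.
Qed.
End geo.

Section integ.
Variable R : realType.
Variable P : probability R R.
Local Open Scope ereal_scope.

Lemma my_le_integral (f1 f2 : R -> \bar R) : (forall x, 0 <= f1 x) ->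
  (forall x, f1 x <= f2 x) -> \int[P]_x f1 x <= \int[P]_x f2 x.
Proof.
move=> f10 f12.
have f20 x : 0 <= f2 x by apply: le_trans (f12 x).
rewrite !ge0_integralE //.
apply: ereal_sup_le => _ [h /= hf1 <-]; exists h => //= x.
apply: le_trans (hf1 x) _.
by rewrite /patch /=; case: ifP.
Qed.

Lemma int_lb (A : set R) (f : R -> R) (k : R) : measurable A -> (0 <= k)%R ->
  (forall x, A x -> k <= f x)%R -> (forall x, 0 <= f x)%R ->
  k%:E * P A <= \int[P]_x (f x)%:E.
Proof.
move=> mA k0 kf f0.
have -> : P A = \int[P]_x (\1_A x)%:E by rewrite integral_indic // setIT.
rewrite -integralZl_indic //; last by move=> kneg; exfalso; move: k0; rewrite leNgt kneg.
apply: my_le_integral => x; first by rewrite lee_fin mulr_ge0.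
rewrite lee_fin /indic; case: (boolP (x \in A)) => [/set_mem xA|_].
  by rewrite mulr1; exact: kf.
by rewrite mulr0.
Qed.

Lemma int_ub (f : R -> R) (C : R) : (forall x, 0 <= f x <= C)%R ->
  \int[P]_x (f x)%:E <= C%:E.
Proof.
move=> fC.
apply: le_trans (my_le_integral (f2 := fun x => cst C%:E x) _ _) _.
- by move=> x; have /andP[] := fC x.
- by move=> x; have /andP[] := fC x; rewrite lee_fin.
rewrite (integral_cst P measurableT).
suff -> : (P : measure _ _) setT = 1 by rewrite mule1.
exact: probability_setT.
Qed.
End integ.


Lemma cdf_Ioc (R : realType) (P : probability R R) (x2 x3 : R) : x2 <= x3 ->
  P [set` `]x2, x3]] = (Defs.cdf P x3 - Defs.cdf P x2)%:E.
Proof.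
move=> x23.
have h : (Defs.cdf P x3)%:E = ((Defs.cdf P x2)%:E + P [set` `]x2, x3]])%E.
  rewrite -!cdfE.
  have -> : [set` `]-oo, x3]] = [set` `]-oo, x2]] `|` [set` `]x2, x3]].
    apply/seteqP; split => x /=; rewrite !in_itv /=.
      by move=> h; case: (leP x x2) => hx; [left|right; apply/andP; split].
    by case=> [h|/andP[_ ->]] //; apply: le_trans h x23.
  rewrite measureU //.
  apply/seteqP; split => x //= []; rewrite !in_itv /= => h1 /andP[h2 _].
  by move: h1; rewrite leNgt h2.
by rewrite EFinB h (addeC (Defs.cdf P x2)%:E) addeK.
Qed.

Lemma proj_near (R : realType) (th z x : R * R) (r : R) : `|th.1| <= 1 -> `|th.2| <= 1 ->
  ball z r x -> `|Defs.proj th x - Defs.proj th z| <= r + r.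
Proof.
move=> t1 t2 [/= h1 h2]; rewrite /ball /= in h1 h2.
have -> : Defs.proj th x - Defs.proj th z = (x.1 - z.1) * th.1 + (x.2 - z.2) * th.2.
  by rewrite /Defs.proj; ring.
apply: (le_trans (ler_normD _ _)); apply: lerD; rewrite normrM.
  by rewrite -[r]mulr1 ler_pM // ?normr_ge0 // distrC ltW.
by rewrite -[r]mulr1 ler_pM // ?normr_ge0 // distrC ltW.
Qed.

Theorem proposition4 (R : realType) (rho : probability R R)
    (mu : probability (R * R)%type R) :
  no_atoms rho -> Pc_star mu ->
  exists c : R, 0 < c /\
    forall th : R * R, S1 th -> c <= std rho (radon_cdt rho mu th).
Proof.
move=> noat [Hc Haff].
have [M [M0 HM]] := support_bounded Hc.
have [p0 [p1 [p2 [S0 S1' S2 D0]]]] := three_points Haff.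
have [eta eta0 Heta] := eta_lemma D0.
pose r := eta / 8.
have r0 : 0 < r by rewrite divr_gt0.
have mfin : forall z, Defs.support mu z ->
    exists q', mu (ball z r) = q'%:E /\ 0 < q' /\ q' <= 1.
  move=> z hz; have hz' := hz r r0.
  have mb := measurable_ball2 z r.
  have e : mu (ball z r) = (fine (mu (ball z r)))%:E by rewrite fineK // fin_num_measure.
  exists (fine (mu (ball z r))); split => //.
  by move: hz' (probability_le1 mu mb); rewrite e lte_fin lee_fin.
have [a0 [e0 [q00 q01]]] := mfin _ S0.
have [a1 [e1 [q10 q11]]] := mfin _ S1'.
have [a2 [e2 [q20 q21]]] := mfin _ S2.
have [q [q0 [qle0 [qle1 qle2]]]] : exists q, 0 < q /\ q <= a0 /\ q <= a1 /\ q <= a2.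
  exists (Num.min a0 (Num.min a1 a2)); rewrite !lt_min !ge_min !lexx !orbT q00 q10 q20.
  by [].
have q1 : q <= 1 by clear -qle0 q01; lra.
have qball : forall z, z = p0 \/ z = p1 \/ z = p2 -> (q%:E <= mu (ball z r))%E.
  by move=> z [->|[->|->]]; rewrite ?e0 ?e1 ?e2 lee_fin.
pose F := Defs.cdf rho.
have [x1 [h11 h12]] : exists x, q / 4 < F x /\ F x < q / 2.
  by apply: (@cdf_between R rho noat); clear -q0 q1; lra.
have [x2 [h21 h22]] : exists x, 1 - q / 2 < F x /\ F x < 1 - q / 4.
  by apply: (@cdf_between R rho noat); clear -q0 q1; lra.
have [x3 [h31 h32]] : exists x, 1 - q / 8 < F x /\ F x < 1 - q / 16.
  by apply: (@cdf_between R rho noat); clear -q0 q1; lra.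
have x23 : x2 <= x3.
  rewrite leNgt; apply/negP => /ltW /(cdf_mono rho); rewrite -/F.
  by move: h22 h31; clear -q0 q1; lra.
pose p := Num.min (F x1) (F x3 - F x2).
have pp0 : 0 < p.
  by rewrite /p lt_min; apply/andP; split; move: h11 h22 h31; clear -q0 q1; lra.
pose delta := eta / 8.
have delta0 : 0 < delta by rewrite divr_gt0.
exists (Num.sqrt (delta ^+ 2 * p)); split.
  by rewrite sqrtr_gt0 mulr_gt0 // exprn_gt0.
move=> th Sth.
have [t1 t2] := S1_bound Sth.
have [u [v [uv [qu qv]]]] : exists u v, eta <= Defs.proj th v - Defs.proj th u /\
    (q%:E <= mu (ball u r))%E /\ (q%:E <= mu (ball v r))%E.
  have ee1 : (p1.1 - p0.1) * th.1 + (p1.2 - p0.2) * th.2 = Defs.proj th p1 - Defs.proj th p0.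
    by rewrite /Defs.proj; ring.
  have ee2 : (p2.1 - p0.1) * th.1 + (p2.2 - p0.2) * th.2 = Defs.proj th p2 - Defs.proj th p0.
    by rewrite /Defs.proj; ring.
  have := Heta th.1 th.2 Sth; rewrite ee1 ee2.
  case=> h.
    case: (lerP 0 (Defs.proj th p1 - Defs.proj th p0)) => s.
      exists p0, p1; rewrite -(ger0_norm s); split => //; split; apply: qball; auto.
    exists p1, p0; rewrite ltr0_norm // in h; split; first by rewrite -opprB.
    split; apply: qball; auto.
  case: (lerP 0 (Defs.proj th p2 - Defs.proj th p0)) => s.
    exists p0, p2; rewrite -(ger0_norm s); split => //; split; apply: qball; auto.
  exists p2, p0; rewrite ltr0_norm // in h; split; first by rewrite -opprB.
  split; apply: qball; auto.
pose a := Defs.proj th u + (r + r).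
pose b := Defs.proj th v - (r + r + r).
have mpre : forall s, measurable (Defs.proj th @^-1` [set` `]-oo, s]]).
  by move=> s; apply: measurable_proj_pre; exact: measurable_itv.
have Ga : q <= G mu th a.
  rewrite -lee_fin -GE; apply: le_trans qu _; apply: le_measure; rewrite ?inE //.
    exact: measurable_ball2.
  move=> x /(proj_near t1 t2); rewrite /= in_itv /= ler_norml => /andP[_ h].
  by rewrite /a; clear -h; lra.
have Gb : G mu th b <= 1 - q.
  have : (q%:E <= mu (~` (Defs.proj th @^-1` [set` `]-oo, b]])))%E.
    apply: le_trans qv _; apply: le_measure; rewrite ?inE //.
      exact: measurable_ball2.
      exact: measurableC.
    move=> x /(proj_near t1 t2); rewrite /= in_itv /= ler_norml => /andP[h _].
    by rewrite /b; apply/negP; rewrite -ltNge; move: h r0; clear; lra.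
  by rewrite probability_setC // GE -EFinB lee_fin => hh; clear -hh; lra.
have Gmono : forall s t, s <= t -> G mu th s <= G mu th t by move=> *; exact: G_mono.
have Gle1 : forall s, G mu th s <= 1 by move=> *; exact: G_le1.
have Glo : forall s, s < - (M + M) -> G mu th s = 0 by move=> *; exact: (G_lo Sth HM).
have Ghi : forall s, M + M <= s -> G mu th s = 1 by move=> *; exact: (G_hi Sth HM).
have K0 : 0 <= M + M by rewrite addr_ge0 // ltW.
set g := radon_cdt rho mu th.
have gE : forall x, g x = ginv (G mu th) (F x) by [].
have gb : forall x, `|g x| <= M + M.
  by move=> x; rewrite gE; apply: (ginv_bound Gle1 Glo Ghi K0); exact: Fcdf_ge0.
have glo : forall x, x <= x1 -> g x <= a.
  move=> x xx1; rewrite gE; apply: (ginv_le Glo); first exact: Fcdf_ge0.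
  have := cdf_mono rho xx1; rewrite -/F => hh; clear -hh h12 Ga q0; lra.
have ghi : forall x, x2 < x -> x <= x3 -> b <= g x.
  move=> x xx2 xx3; rewrite gE; apply: (ginv_ge Gmono Ghi).
    have := cdf_mono rho (ltW xx2); rewrite -/F => hh; clear -hh h21 Gb q0; lra.
  have := cdf_mono rho xx3; rewrite -/F => hh; clear -hh h32 q0; lra.
rewrite /std; set m := mean rho g.
set I := integral _ _ _.
have Iub : (I <= ((M + M + `|m|) ^+ 2)%:E)%E.
  apply: int_ub => x; apply/andP; split; first exact: sqr_ge0.
  have h : `|g x - m| <= M + M + `|m| by apply: le_trans (ler_normB _ _) _; rewrite lerD2r.
  have h0 := normr_ge0 (g x - m).
  rewrite -(real_normK (num_real (g x - m))); move: h h0; clear; nra.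
have hba : delta <= (b - a) / 2.
  by rewrite /a /b /delta /r; move: uv eta0; clear; lra.
have Ilb : ((delta ^+ 2 * p)%:E <= I)%E.
  case: (lerP ((a + b) / 2) m) => hm.
    have hk : forall x, [set` `]-oo, x1]] x -> delta ^+ 2 <= (g x - m) ^+ 2.
      move=> x; rewrite /= in_itv /= => /glo hx.
      have hd : delta <= m - g x by move: hx hm hba; clear; lra.
      move: hd delta0; clear; nra.
    have := @int_lb R rho _ _ _ (measurable_itv _) (sqr_ge0 delta) hk (fun x => sqr_ge0 _).
    apply: le_trans; rewrite cdfE -EFinM lee_fin ler_wpM2l ?sqr_ge0 //.
    by rewrite /p ge_min lexx.
  have hk : forall x, [set` `]x2, x3]] x -> delta ^+ 2 <= (g x - m) ^+ 2.
    move=> x; rewrite /= in_itv /= => /andP[hx2 hx3]; have hx := ghi x hx2 hx3.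
    have hd : delta <= g x - m by move: hx hm hba; clear; lra.
    move: hd delta0; clear; nra.
  have := @int_lb R rho _ _ _ (measurable_itv _) (sqr_ge0 delta) hk (fun x => sqr_ge0 _).
  apply: le_trans; rewrite cdf_Ioc // -EFinM lee_fin ler_wpM2l ?sqr_ge0 //.
  by rewrite /p ge_min lexx orbT.
have I0 : (0 <= I)%E by apply: integral_ge0 => x _; rewrite lee_fin sqr_ge0.
have If : I = (fine I)%:E by rewrite fineK // ge0_fin_numE // (le_lt_trans Iub) // ltry.
have : delta ^+ 2 * p <= fine I by rewrite -lee_fin -If.
exact: ler_wsqrtr.
Qed.
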